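(* Let $M,N>0$. Define a sequence $a^{(m)}=a^{(m)}(M,N)$ by $a^{(0)}=M$ and, for $m\ge1$, $$a^{(m)}=Nm\sum_{r=0}^{m-1}\binom{m-1}{r}a^{(r)}a^{(m-r-1)}+\frac{N}{m+1}\sum_{r=2}^{m-1}\binom{m+1}{r}a^{(r)}a^{(m-r+1)}.$$ Then $\sum_{m=0}^\infty a^{(m)}t^m/m!$ converges in a neighborhood of $t=0$ and its sum equals $$a(t)=\frac{M+t\left(M^2N+\frac{1}{2N}\right)-t\sqrt{\frac{1}{4N^2}-t\left(2M^3N+\frac{M}{N}\right)-t^2M^4N^2}}{t^2+1}.$$
   Context: An empty sum equals $0$. *)

(* Defs.v *)
From Stdlib Require Import Reals.
From Coquelicot Require Import Coquelicot.
Open Scope R_scope.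

(* The recurrence defining a^(m)(M,N):
   a 0 = M and, for m >= 1,
   a m = N m sum_{r=0}^{m-1} binom(m-1,r) a r a (m-r-1)
         + N/(m+1) sum_{r=2}^{m-1} binom(m+1,r) a r a (m-r+1).
   (sum_n_m f 2 (m-1) is the empty sum 0 when m-1 < 2.) *)
Definition is_a_seq (M N : R) (a : nat -> R) : Prop :=
  a 0%nat = M /\
  forall m : nat, (1 <= m)%nat ->
    a m = N * INR m * sum_n_m (fun r => Binomial.C (m - 1) r * a r * a (m - r - 1)%nat) 0 (m - 1)
          + N / INR (m + 1) *
            sum_n_m (fun r => Binomial.C (m + 1) r * a r * a (m - r + 1)%nat) 2 (m - 1).

Definition a_closed (M N t : R) : R :=
  (M + t * (M ^ 2 * N + 1 / (2 * N))
     - t * sqrt (1 / (4 * N ^ 2) - t * (2 * M ^ 3 * N + M / N) - t ^ 2 * M ^ 4 * N ^ 2))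
  / (t ^ 2 + 1).

(* Main.v *)
Require Import Defs.
From Stdlib Require Import Reals Lra Lia Arith.
From Coquelicot Require Import Coquelicot.
Open Scope R_scope.

Lemma sum_plusR (f g : nat -> R) n m :
  sum_n_m (fun k => f k + g k) n m = sum_n_m f n m + sum_n_m g n m.
Proof. exact (sum_n_m_plus f g n m). Qed.

Lemma sum_multR (c : R) (f : nat -> R) n m :
  sum_n_m (fun k => c * f k) n m = c * sum_n_m f n m.
Proof. exact (sum_n_m_mult_l c f n m). Qed.

Lemma sum_extR (f g : nat -> R) n m :
  (forall k, (n <= k <= m)%nat -> f k = g k) -> sum_n_m f n m = sum_n_m g n m.
Proof. apply sum_n_m_ext_loc. Qed.

Lemma sum_nonneg (f : nat -> R) n m :
  (forall k, (n <= k <= m)%nat -> 0 <= f k) -> 0 <= sum_n_m f n m.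
Proof.
  intros H. destruct (le_lt_dec n m) as [Hle|Hlt].
  - induction Hle.
    + rewrite sum_n_n. apply H. lia.
    + rewrite sum_n_Sm by lia. change (plus ?x ?y) with (x + y).
      apply Rplus_le_le_0_compat; [apply IHHle; intros; apply H; lia| apply H; lia].
  - rewrite sum_n_m_zero by lia. apply Rle_refl.
Qed.

Section S.
Variables (M N : R) (a : nat -> R).
Hypothesis hM : 0 < M.
Hypothesis hN : 0 < N.
Hypothesis ha : is_a_seq M N a.

Definition b (m : nat) : R := a m / INR (Factorial.fact m).

Lemma b0 : b 0 = M.
Proof. unfold b. destruct ha as [H _]. rewrite H. simpl. field. Qed.

Lemma rec_b k :
  b (S k) = N * sum_n_m (fun r => b r * b (k - r)%nat) 0 k
          + N * sum_n_m (fun r => b r * b (S (S k) - r)%nat) 2 k.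
Proof.
  destruct ha as [_ H]. specialize (H (S k) ltac:(lia)).
  replace (S k - 1)%nat with k in H by lia.
  assert (E1 : sum_n_m (fun r => Binomial.C k r * a r * a (S k - r - 1)%nat) 0 k
     = INR (Factorial.fact k) * sum_n_m (fun r => b r * b (k - r)%nat) 0 k).
  { rewrite <- sum_multR. apply sum_extR. intros r Hr.
    replace (S k - r - 1)%nat with (k - r)%nat by lia.
    unfold Binomial.C, b.
    pose proof (INR_fact_neq_0 r). pose proof (INR_fact_neq_0 (k - r)).
    pose proof (INR_fact_neq_0 k). field. auto. }
  assert (E2 : sum_n_m (fun r => Binomial.C (S k + 1) r * a r * a (S k - r + 1)%nat) 2 k
     = INR (Factorial.fact (S (S k))) * sum_n_m (fun r => b r * b (S (S k) - r)%nat) 2 k).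
  { rewrite <- sum_multR. apply sum_extR. intros r Hr.
    replace (S k - r + 1)%nat with (S (S k) - r)%nat by lia.
    replace (S k + 1)%nat with (S (S k)) by lia.
    unfold Binomial.C, b.
    pose proof (INR_fact_neq_0 r). pose proof (INR_fact_neq_0 (S (S k) - r)).
    pose proof (INR_fact_neq_0 (S (S k))). field. auto. }
  rewrite E1, E2 in H. unfold b at 1. rewrite H.
  replace (S k + 1)%nat with (S (S k)) by lia.
  change (Factorial.fact (S (S k))) with (S (S k) * Factorial.fact (S k))%nat.
  change (Factorial.fact (S k)) with (S k * Factorial.fact k)%nat.
  rewrite !mult_INR.
  pose proof (INR_fact_neq_0 k).
  assert (INR (S k) <> 0) by (apply not_0_INR; lia).
  assert (INR (S (S k)) <> 0) by (apply not_0_INR; lia).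
  field. auto.
Qed.

Lemma b_nonneg m : 0 <= b m.
Proof.
  induction m as [m IH] using lt_wf_ind.
  destruct m as [|k]. rewrite b0; lra.
  rewrite rec_b. apply Rplus_le_le_0_compat; apply Rmult_le_pos; try lra;
  apply sum_nonneg; intros r Hr; apply Rmult_le_pos; apply IH; lia.
Qed.


Definition Bc := M ^ 2 * N + 1 / (2 * N).
Definition h (m : nat) : R :=
  match m with 0%nat => b 1 - Bc | S k => b (S (S k)) + b k end.
Definition Dc (m : nat) : R :=
  match m with
  | 0%nat => 1 / (4 * N ^ 2)
  | 1%nat => - (2 * M ^ 3 * N + M / N)
  | 2%nat => - (M ^ 4 * N ^ 2)
  | _ => 0 end.

Lemma b1 : b 1 = N * M ^ 2.
Proof. rewrite rec_b. rewrite sum_n_n, sum_n_m_zero by lia. rewrite b0.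
  change zero with 0. simpl. rewrite b0. ring. Qed.
Lemma b2 : b 2 = 2 * N ^ 2 * M ^ 3.
Proof. rewrite rec_b. rewrite (sum_n_m_zero _ 2 1) by lia.
  rewrite sum_Sn_m, sum_n_n by lia. change zero with 0. change plus with Rplus. simpl.
  rewrite b0, b1. ring. Qed.
Lemma b3 : b 3 = 5 * N ^ 3 * M ^ 4 + 4 * N ^ 5 * M ^ 6.
Proof. rewrite rec_b. rewrite (sum_n_n _ 2).
  rewrite sum_Sn_m, sum_Sn_m, sum_n_n by lia. change plus with Rplus. simpl.
  rewrite b0, b1, b2. ring. Qed.

Lemma h0 : h 0 = - / (2 * N).
Proof. simpl. rewrite b1. unfold Bc. field. lra. Qed.

Ltac idx := f_equal; try (f_equal; lia).

Lemma hh m : sum_n_m (fun r => h r * h (m - r)%nat) 0 m = Dc m.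
Proof.
  destruct m as [|[|[|k]]].
  - rewrite sum_n_n. simpl. rewrite ?b0, ?b1, ?b2, ?b3. unfold Bc. simpl. field. lra.
  - rewrite sum_Sn_m, sum_n_n by lia. change plus with Rplus. simpl.
    rewrite ?b0, ?b1, ?b2, ?b3. unfold Bc. field. lra.
  - rewrite sum_Sn_m, sum_Sn_m, sum_n_n by lia. change plus with Rplus. simpl.
    rewrite ?b0, ?b1, ?b2, ?b3. unfold Bc. field. lra.
  - change (Dc (S (S (S k)))) with 0.
    set (F := fun s => b s * b (k + 3 - s)%nat).
    set (G := fun s => b s * b (k + 5 - s)%nat).
    set (H := fun s => b s * b (k + 1 - s)%nat).
    assert (R1 : b (k + 4) = N * sum_n_m F 0 (k + 3) + N * sum_n_m G 2 (k + 3)).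
    { replace (k + 4)%nat with (S (k + 3)) by lia. rewrite rec_b. unfold F, G.
      apply f_equal2; apply f_equal; apply sum_extR; intros; idx. }
    assert (R2 : b (k + 2) = N * sum_n_m H 0 (k + 1) + N * sum_n_m F 2 (k + 1)).
    { replace (k + 2)%nat with (S (k + 1)) by lia. rewrite rec_b. unfold F, H.
      apply f_equal2; apply f_equal; apply sum_extR; intros; idx. }
    assert (Full : sum_n_m F 0 (k + 3) = F 0%nat + F 1%nat + sum_n_m F 2 (k + 3)).
    { rewrite sum_Sn_m, sum_Sn_m by lia. change plus with Rplus. rewrite <- Rplus_assoc; reflexivity. }
    assert (P3e : sum_n_m F 0 (k + 1) = F 0%nat + F 1%nat + sum_n_m F 2 (k + 1)).
    { rewrite sum_Sn_m, sum_Sn_m by lia. change plus with Rplus. rewrite <- Rplus_assoc; reflexivity. }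
    rewrite sum_Sn_m by lia. change plus with Rplus.
    replace (S (S (S k))) with (S (k + 2)) by lia.
    rewrite sum_n_Sm by lia. change plus with Rplus.
    replace (S (k + 2) - 0)%nat with (S (k + 2)) by lia.
    replace (S (k + 2) - S (k + 2))%nat with 0%nat by lia.
    rewrite (sum_extR _ (fun r => (b (S r) * b (k + 4 - r)%nat + b (S r) * b (k + 2 - r)%nat)
        + (b (r - 1)%nat * b (k + 4 - r)%nat + b (r - 1)%nat * b (k + 2 - r)%nat))).
    2:{ intros r Hr. destruct r as [|r]. lia.
        replace (S (k + 2) - S r)%nat with (S (k + 1 - r)) by lia. cbn [h].
        replace (S r - 1)%nat with r by lia.
        replace (S (S (k + 1 - r))) with (k + 4 - S r)%nat by lia.
        replace (k + 1 - r)%nat with (k + 2 - S r)%nat by lia. ring. }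
    rewrite !sum_plusR.
    assert (E1 : sum_n_m (fun r => b (S r) * b (k + 4 - r)%nat) 1 (k + 2) = sum_n_m G 2 (k + 3)).
    { replace (k + 3)%nat with (S (k + 2)) by lia. rewrite <- sum_n_m_S. apply sum_extR. intros; unfold G; cbv beta; idx. }
    assert (E2 : sum_n_m (fun r => b (S r) * b (k + 2 - r)%nat) 1 (k + 2) = sum_n_m F 2 (k + 3)).
    { replace (k + 3)%nat with (S (k + 2)) by lia. rewrite <- sum_n_m_S. apply sum_extR. intros; unfold F; cbv beta; idx. }
    assert (E3 : sum_n_m (fun r => b (r - 1)%nat * b (k + 4 - r)%nat) 1 (k + 2) = sum_n_m F 0 (k + 1)).
    { replace (k + 2)%nat with (S (k + 1)) by lia. rewrite <- sum_n_m_S. apply sum_extR. intros; unfold F; cbv beta; idx. }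
    assert (E4 : sum_n_m (fun r => b (r - 1)%nat * b (k + 2 - r)%nat) 1 (k + 2) = sum_n_m H 0 (k + 1)).
    { replace (k + 2)%nat with (S (k + 1)) by lia. rewrite <- sum_n_m_S. apply sum_extR. intros; unfold H; cbv beta; idx. }
    rewrite E1, E2, E3, E4.
    assert (Hm : h (S (k + 2)) = b (k + 4) + b (k + 2)).
    { cbn [h]. f_equal; idx. }
    rewrite Hm, h0.
    apply (Rmult_eq_reg_l N); [|lra].
    rewrite Rmult_0_r.
    assert (X1: N * sum_n_m G 2 (k+3) = b (k+4) - N*(F 0%nat + F 1%nat + sum_n_m F 2 (k+3))) by (rewrite R1, Full; ring).
    assert (X2: N * sum_n_m H 0 (k+1) = b (k+2) - N * sum_n_m F 2 (k+1)) by (rewrite R2; ring).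
    rewrite P3e. rewrite !Rmult_plus_distr_l. rewrite X1, X2. field. lra.
Qed.


Lemma sum_le_loc (f g : nat -> R) n m :
  (forall k, (n <= k <= m)%nat -> f k <= g k) -> sum_n_m f n m <= sum_n_m g n m.
Proof.
  intros H. destruct (le_lt_dec n m) as [Hle|Hlt].
  - induction Hle.
    + rewrite !sum_n_n. apply H. lia.
    + rewrite !sum_n_Sm by lia. change plus with Rplus.
      apply Rplus_le_compat; [apply IHHle; intros; apply H; lia| apply H; lia].
  - rewrite !sum_n_m_zero by lia. apply Rle_refl.
Qed.

Lemma sum_abs (f : nat -> R) n m : Rabs (sum_n_m f n m) <= sum_n_m (fun k => Rabs (f k)) n m.
Proof. exact (norm_sum_n_m f n m). Qed.

Lemma sum_refl (f : nat -> R) n : sum_n_m (fun r => f (n - r)%nat) 0 n = sum_n_m f 0 n.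
Proof.
  revert f. induction n; intros f.
  - rewrite !sum_n_n. reflexivity.
  - rewrite sum_Sn_m by lia. rewrite <- sum_n_m_S.
    rewrite (sum_n_Sm f 0 n) by lia. change plus with Rplus.
    rewrite <- IHn. rewrite Rplus_comm. f_equal.
    apply sum_extR. intros. f_equal. lia.
Qed.

Definition w (m : nat) : R := / (INR (m + 1)) ^ 2.

Lemma w_pos m : 0 < w m.
Proof. unfold w. apply Rinv_0_lt_compat. apply pow_lt. apply lt_0_INR. lia. Qed.

Lemma sum_w m : sum_n_m w 0 m <= 2 - / INR (m + 1).
Proof.
  induction m.
  - rewrite sum_n_n. unfold w. simpl. lra.
  - rewrite sum_n_Sm by lia. change plus with Rplus.
    assert (H: w (S m) <= / INR (m + 1) - / INR (S m + 1)).
    { unfold w. rewrite !plus_INR, S_INR. simpl.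
      pose proof (pos_INR m).
      replace (/ (INR m + 1) - / (INR m + 1 + 1)) with (/ ((INR m + 1) * (INR m + 1 + 1))) by (field; lra).
      apply Rinv_le_contravar. nra. nra. }
    lra.
Qed.

Lemma sum_sub (f : nat -> R) m :
  (forall k, 0 <= f k) -> sum_n_m f 1 m <= sum_n_m f 0 (S m).
Proof.
  intros H. rewrite (sum_Sn_m f 0) by lia. change plus with Rplus.
  rewrite sum_n_Sm by lia. change plus with Rplus. pose proof (H 0%nat). pose proof (H (S m)). lra.
Qed.

Lemma w_pair (x y z : R) : 0 < x -> 0 < y -> 0 < z -> z <= x + y ->
  / (x ^ 2 * y ^ 2) <= 2 * / z ^ 2 * (/ x ^ 2 + / y ^ 2).
Proof.
  intros. set (K := / (x ^ 2 * y ^ 2 * z ^ 2)).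
  assert (0 < K) by (unfold K; apply Rinv_0_lt_compat; assert (0<x^2) by (apply pow_lt; lra); assert (0<y^2) by (apply pow_lt;lra); assert (0<z^2) by (apply pow_lt; lra); apply Rmult_lt_0_compat; [apply Rmult_lt_0_compat|]; assumption).
  replace (/ (x ^ 2 * y ^ 2)) with (z ^ 2 * K) by (unfold K; field; lra).
  replace (2 * / z ^ 2 * (/ x ^ 2 + / y ^ 2)) with (2 * (x ^ 2 + y ^ 2) * K) by (unfold K; field; lra).
  apply Rmult_le_compat_r. lra.
  assert (z*z <= (x+y)*(x+y)) by (apply Rmult_le_compat; lra). pose proof (pow2_ge_0 (x-y)). nra.
Qed.

Lemma conv_w j : sum_n_m (fun r => w r * w (S j - r)%nat) 1 j <= 8 * w (S j).
Proof.
  apply Rle_trans with (sum_n_m (fun r => 2 * w (S j) * (w r + w (S j - r)%nat)) 1 j).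
  - apply sum_le_loc. intros r Hr. unfold w.
    rewrite <- Rinv_mult.
    replace (INR (r + 1) ^ 2 * INR (S j - r + 1) ^ 2) with (INR (r + 1) ^ 2 * INR (S j - r + 1) ^ 2) by reflexivity.
    apply w_pair; try (apply lt_0_INR; lia).
    rewrite <- plus_INR. apply le_INR. lia.
  - rewrite sum_multR, sum_plusR.
    assert (A1 : sum_n_m w 1 j <= 2).
    { eapply Rle_trans. apply sum_sub. intros; left; apply w_pos.
      eapply Rle_trans. apply sum_w. pose proof (pos_INR (S j + 1)).
      assert (0 < / INR (S j + 1)) by (apply Rinv_0_lt_compat, lt_0_INR; lia). lra. }
    assert (A2 : sum_n_m (fun r => w (S j - r)%nat) 1 j <= 2).
    { eapply Rle_trans. apply (sum_sub (fun r => w (S j - r)%nat)). intros; left; apply w_pos.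
      rewrite sum_refl.
      eapply Rle_trans. apply sum_w. 
      assert (0 < / INR (S j + 1)) by (apply Rinv_0_lt_compat, lt_0_INR; lia). lra. }
    pose proof (w_pos (S j)). nra.
Qed.


Lemma h_rec j : h (S j) = N * (sum_n_m (fun r => h r * h (S j - r)%nat) 1 j - Dc (S j)).
Proof.
  pose proof (hh (S j)) as E.
  rewrite sum_Sn_m in E by lia. change plus with Rplus in E.
  rewrite sum_n_Sm in E by lia. change plus with Rplus in E.
  rewrite Nat.sub_diag, Nat.sub_0_r, h0 in E.
  rewrite <- E. field. lra.
Qed.

Definition Aa := / (16 * N).
Definition Rr := 1 + 300 * N ^ 2 * (Rabs (Dc 1) + Rabs (Dc 2)).

Lemma Rr_ge1 : 1 <= Rr.
Proof. unfold Rr. pose proof (Rabs_pos (Dc 1)). pose proof (Rabs_pos (Dc 2)).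
  assert (0 <= N^2) by (apply pow_le; lra). nra. Qed.

Lemma h_bound m : (1 <= m)%nat -> Rabs (h m) <= Aa * Rr ^ m * w m.
Proof.
  induction m as [m IH] using lt_wf_ind. intros Hm.
  destruct m as [|j]. lia.
  rewrite h_rec.
  assert (HS : Rabs (sum_n_m (fun r => h r * h (S j - r)%nat) 1 j) <= Aa ^ 2 * Rr ^ (S j) * (8 * w (S j))).
  { eapply Rle_trans. apply sum_abs.
    eapply Rle_trans with (sum_n_m (fun r => Aa ^ 2 * Rr ^ S j * (w r * w (S j - r)%nat)) 1 j).
    - apply sum_le_loc. intros r Hr. rewrite Rabs_mult.
      replace (Aa ^ 2 * Rr ^ S j * (w r * w (S j - r)%nat)) with
        ((Aa * Rr ^ r * w r) * (Aa * Rr ^ (S j - r) * w (S j - r)%nat)).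
      + apply Rmult_le_compat; try apply Rabs_pos; apply IH; lia.
      + assert (EE : Rr ^ S j = Rr ^ r * Rr ^ (S j - r)) by (rewrite <- pow_add; f_equal; lia). rewrite EE. ring.
    - rewrite sum_multR. apply Rmult_le_compat_l.
      + apply Rmult_le_pos. apply pow_le. unfold Aa. left; apply Rinv_0_lt_compat; lra.
        apply pow_le. pose proof Rr_ge1; lra.
      + apply conv_w. }
  assert (HD : N * Rabs (Dc (S j)) <= Aa * Rr ^ S j * w (S j) / 2).
  { pose proof Rr_ge1 as R1. pose proof (Rabs_pos (Dc 1)). pose proof (Rabs_pos (Dc 2)).
    assert (0 < N^2) by (apply pow_lt; lra).
    destruct j as [|[|j]].
    - unfold Aa, w. simpl. 
      replace (/ (16 * N) * (Rr * 1) * / ((1 + 1) * ((1 + 1) * 1)) / 2) with (Rr / (128 * N)) by (field; lra).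
      replace (N * Rabs (- (2 * (M * (M * (M * 1))) * N + M / N))) with (128 * N^2 * Rabs (Dc 1) / (128 * N)) by (simpl; field; lra).
      apply Rmult_le_compat_r. left; apply Rinv_0_lt_compat; lra.
      unfold Rr. nra.
    - unfold Aa, w. simpl.
      replace (/ (16 * N) * (Rr * (Rr * 1)) * / ((1 + 1 + 1) * ((1 + 1 + 1) * 1)) / 2) with (Rr * Rr / (288 * N)) by (field; lra).
      replace (N * Rabs (- (M * (M * (M * (M * 1))) * (N * (N * 1))))) with (288 * N^2 * Rabs (Dc 2) / (288 * N)) by (simpl; field; lra).
      apply Rmult_le_compat_r. left; apply Rinv_0_lt_compat; lra.
      assert (288 * N ^ 2 * Rabs (Dc 2) <= Rr) by (unfold Rr; nra). nra.
    - change (Dc (S (S (S j)))) with 0. rewrite Rabs_R0, Rmult_0_r.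
      pose proof (w_pos (S (S (S j)))). unfold Aa.
      assert (0 < / (16 * N)) by (apply Rinv_0_lt_compat; lra).
      assert (0 < Rr ^ S (S (S j))) by (apply pow_lt; lra).
      assert (0 < / (16 * N) * Rr ^ S (S (S j)) * w (S (S (S j)))) by (apply Rmult_lt_0_compat; [apply Rmult_lt_0_compat|]; assumption).
      lra. }
  rewrite Rabs_mult, Rabs_pos_eq by lra.
  eapply Rle_trans. apply Rmult_le_compat_l. lra. apply Rabs_triang.
  rewrite Rabs_Ropp.
  replace (Aa * Rr ^ S j * w (S j)) with (N * (Aa ^ 2 * Rr ^ S j * (8 * w (S j))) + Aa * Rr ^ S j * w (S j) / 2)
    by (unfold Aa; field; lra).
  rewrite Rmult_plus_distr_l. apply Rplus_le_compat; [apply Rmult_le_compat_l; lra | exact HD].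
Qed.


Lemma series_fin (u : nat -> R) : (forall n, (3 <= n)%nat -> u n = 0) ->
  is_series u (u 0%nat + u 1%nat + u 2%nat).
Proof.
  intros H. unfold is_series.
  apply filterlim_ext_loc with (fun _ => u 0%nat + u 1%nat + u 2%nat).
  - exists 2%nat. intros n Hn.
    induction Hn.
    + unfold sum_n. rewrite sum_Sn_m, sum_Sn_m, sum_n_n by lia. change plus with Rplus. ring.
    + rewrite sum_Sn. rewrite <- IHHn. rewrite (H (S m)) by lia. change plus with Rplus. ring.
  - apply filterlim_const.
Qed.

Lemma pseries_fin (c : nat -> R) x : (forall n, (3 <= n)%nat -> c n = 0) ->
  is_pseries c x (c 0%nat + c 1%nat * x + c 2%nat * x ^ 2).
Proof.
  intros H. unfold is_pseries.
  replace (c 0%nat + c 1%nat * x + c 2%nat * x ^ 2) with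
   (scal (pow_n x 0) (c 0%nat) + scal (pow_n x 1) (c 1%nat) + scal (pow_n x 2) (c 2%nat)).
  - apply series_fin. intros n Hn. rewrite H by lia. change scal with (@mult R_AbsRing). unfold mult. simpl. ring.
  - simpl. unfold scal, mult, one; simpl. unfold mult, one; simpl. ring.
Qed.

Definition Kb := M + N * M ^ 2 + Aa.

Lemma b_geo m : Rabs (b m) <= Kb * Rr ^ m.
Proof.
  pose proof Rr_ge1 as R1.
  assert (HA : 0 < Aa) by (unfold Aa; apply Rinv_0_lt_compat; lra).
  assert (HNM : 0 <= N * M ^ 2) by (apply Rmult_le_pos; [lra| apply pow_le; lra]).
  rewrite Rabs_pos_eq by apply b_nonneg.
  destruct m as [|[|k]].
  - rewrite b0. unfold Kb. simpl. lra.
  - rewrite b1. unfold Kb. simpl. nra.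
  - assert (E : b (S (S k)) = h (S k) - b k) by (cbn [h]; ring).
    rewrite E. pose proof (b_nonneg k).
    pose proof (h_bound (S k) ltac:(lia)).
    assert (w (S k) <= 1).
    { unfold w. rewrite <- Rinv_1. apply Rinv_le_contravar. lra.
      assert (1 <= INR (S k + 1)) by (apply (le_INR 1); lia). simpl in *. nra. }
    assert (0 < Rr ^ S k) by (apply pow_lt; lra).
    assert (Rr ^ S k <= Rr ^ S (S k)) by (apply Rle_pow; [lra| lia]).
    pose proof (w_pos (S k)).
    assert (Aa * Rr ^ S k * w (S k) <= Aa * Rr ^ S k) by (rewrite <- (Rmult_1_r (Aa * Rr ^ S k)) at 2; apply Rmult_le_compat_l; nra).
    pose proof (Rle_abs (h (S k))).
    assert (Kb * Rr ^ S (S k) >= Aa * Rr ^ S (S k)). { unfold Kb. nra. }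
    nra.
Qed.

Definition Kh := / (2 * N) + Aa.

Lemma h_geo m : Rabs (h m) <= Kh * Rr ^ m.
Proof.
  pose proof Rr_ge1 as R1.
  assert (HA : 0 < Aa) by (unfold Aa; apply Rinv_0_lt_compat; lra).
  assert (0 < / (2 * N)) by (apply Rinv_0_lt_compat; lra).
  destruct m as [|k].
  - rewrite h0, Rabs_Ropp, Rabs_pos_eq by lra. unfold Kh. simpl. lra.
  - pose proof (h_bound (S k) ltac:(lia)).
    assert (w (S k) <= 1).
    { unfold w. rewrite <- Rinv_1. apply Rinv_le_contravar. lra.
      assert (1 <= INR (S k + 1)) by (apply (le_INR 1); lia). simpl in *. nra. }
    assert (0 < Rr ^ S k) by (apply pow_lt; lra).
    pose proof (w_pos (S k)).
    assert (Aa * Rr ^ S k * w (S k) <= Aa * Rr ^ S k) by (rewrite <- (Rmult_1_r (Aa * Rr ^ S k)) at 2; apply Rmult_le_compat_l; nra).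
    assert (0 <= / (2 * N) * Rr ^ S k) by nra.
    unfold Kh. rewrite Rmult_plus_distr_r. lra.
Qed.

Lemma cv_rad (c : nat -> R) K : 0 <= K -> (forall m, Rabs (c m) <= K * Rr ^ m) ->
  Rbar_le (/ Rr) (CV_radius c).
Proof.
  intros HK H. pose proof Rr_ge1 as R1.
  destruct (CV_radius_bounded c) as [Hub _]. apply Hub.
  exists K. intros n. rewrite Rabs_mult, <- RPow_abs, (Rabs_pos_eq (/ Rr)).
  - rewrite pow_inv. specialize (H n).
    assert (0 < Rr ^ n) by (apply pow_lt; lra).
    apply Rle_trans with (K * Rr ^ n * / Rr ^ n).
    + apply Rmult_le_compat_r. left; apply Rinv_0_lt_compat; lra. exact H.
    + right. field. lra.
  - left. apply Rinv_0_lt_compat. lra.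
Qed.


Lemma main_sec : exists rho : R, 0 < rho /\
    forall t : R, Rabs t < rho ->
      is_series (fun m : nat => a m * t ^ m / INR (Factorial.fact m)) (a_closed M N t).
Proof.
  pose proof Rr_ge1 as R1.
  assert (HA : 0 < Aa) by (unfold Aa; apply Rinv_0_lt_compat; lra).
  assert (HiN : 0 < / (2 * N)) by (apply Rinv_0_lt_compat; lra).
  assert (HiR : 0 < / Rr) by (apply Rinv_0_lt_compat; lra).
  assert (CVb : Rbar_le (/ Rr) (CV_radius b)).
  { apply (cv_rad b Kb). unfold Kb. assert (0 <= N * M ^ 2) by (apply Rmult_le_pos; [lra| apply pow_le; lra]). lra.
    apply b_geo. }
  assert (CVh : Rbar_le (/ Rr) (CV_radius h)).
  { apply (cv_rad h Kh). unfold Kh. lra. apply h_geo. }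
  assert (Hc : continuity_pt (PSeries h) 0).
  { apply PSeries_continuity. eapply Rbar_lt_le_trans; [|exact CVh]. simpl. rewrite Rabs_R0. exact HiR. }
  unfold continuity_pt, continue_in, limit1_in, limit_in in Hc.
  destruct (Hc (/ (2 * N)) HiN) as [alp [Halp Hcont]].
  exists (Rmin (/ Rr) alp). split. apply Rmin_glb_lt; assumption.
  intros t Ht.
  assert (Htr : Rabs t < / Rr) by (eapply Rlt_le_trans; [exact Ht| apply Rmin_l]).
  assert (Hta : Rabs t < alp) by (eapply Rlt_le_trans; [exact Ht| apply Rmin_r]).
  assert (Lb : Rbar_lt (Rabs t) (CV_radius b)) by (eapply Rbar_lt_le_trans; [|exact CVb]; exact Htr).
  assert (Lh : Rbar_lt (Rabs t) (CV_radius h)) by (eapply Rbar_lt_le_trans; [|exact CVh]; exact Htr).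
  set (S := PSeries b t). set (H := PSeries h t).
  assert (HS : is_pseries b t S) by (apply PSeries_correct, CV_radius_inside, Lb).
  assert (HH : is_pseries h t H) by (apply PSeries_correct, CV_radius_inside, Lh).
  assert (HHH := is_pseries_mult h h t H H HH HH Lh Lh).
  assert (HD : is_pseries (PS_mult h h) t (Dc 0%nat + Dc 1%nat * t + Dc 2%nat * t ^ 2)).
  { apply is_pseries_ext with Dc.
    - intros n. unfold PS_mult. rewrite <- sum_n_Reals. unfold sum_n. rewrite hh. reflexivity.
    - apply pseries_fin. intros n Hn. destruct n as [|[|[|n]]]; try lia. reflexivity. }
  assert (EHH : H * H = Dc 0%nat + Dc 1%nat * t + Dc 2%nat * t ^ 2).
  { apply is_pseries_unique in HHH. apply is_pseries_unique in HD. rewrite <- HHH, <- HD. reflexivity. }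
  set (e := PS_plus (PS_plus b (PS_incr_n b 2)) (PS_scal (-1) (PS_incr_1 h))).
  pose proof (is_pseries_incr_n b 2 t S HS) as I2.
  pose proof (is_pseries_plus _ _ _ _ _ HS I2) as I3.
  pose proof (is_pseries_incr_1 h t H HH) as I4.
  assert (Hc1 : mult t (-1) = mult (-1) t) by (unfold mult; simpl; ring).
  pose proof (is_pseries_scal (-1) _ t _ Hc1 I4) as I5.
  pose proof (is_pseries_plus _ _ _ _ _ I3 I5) as He1.
  fold e in He1.
  assert (He2 : is_pseries e t (e 0%nat + e 1%nat * t + e 2%nat * t ^ 2)).
  { apply pseries_fin. intros n Hn. destruct n as [|[|[|n]]]; try lia.
    unfold e, PS_plus, PS_scal, PS_incr_n, PS_incr_1. simpl.
    unfold plus, scal, mult; simpl. unfold plus, mult; simpl. ring. }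
  assert (Elin : S + t ^ 2 * S - t * H = M + Bc * t).
  { apply is_pseries_unique in He1. apply is_pseries_unique in He2. rewrite He2 in He1.
    revert He1. unfold e, PS_plus, PS_scal, PS_incr_n, PS_incr_1. simpl.
    unfold plus, scal, mult, zero; simpl. unfold plus, mult, zero; simpl.
    intros E. change (b 0 + 0 + -1 * 0 + (b 1 + 0 + -1 * (b 1 - Bc)) * t + (b 2 + b 0 + -1 * (b 2 + b 0)) * (t * (t * 1)) = S + t * (t * 1) * S + -1 * (t * H)) in E. transitivity (S + t * (t * 1) * S + -1 * (t * H)). ring. rewrite <- E. rewrite b0. ring. }
  assert (Hneg : H < 0).
  { destruct (Req_dec t 0) as [E0|E0].
    - unfold H. rewrite E0, PSeries_0, h0. lra.
    - assert (Hd := Hcont t). simpl in Hd. unfold R_dist in Hd.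
      rewrite PSeries_0, h0 in Hd.
      assert (Habs : Rabs (PSeries h t - - / (2 * N)) < / (2 * N)).
      { apply Hd. split. split. exact I. auto. rewrite Rminus_0_r. exact Hta. }
      fold H in Habs. apply Rabs_def2 in Habs. lra. }
  assert (Hsq : sqrt (1 / (4 * N ^ 2) - t * (2 * M ^ 3 * N + M / N) - t ^ 2 * M ^ 4 * N ^ 2) = - H).
  { replace (1 / (4 * N ^ 2) - t * (2 * M ^ 3 * N + M / N) - t ^ 2 * M ^ 4 * N ^ 2) with (Rsqr H).
    rewrite sqrt_Rsqr_abs. apply Rabs_left. exact Hneg.
    unfold Rsqr. rewrite EHH. simpl. ring. }
  assert (HSv : a_closed M N t = S).
  { unfold a_closed. rewrite Hsq. unfold Bc in Elin.
    assert (0 <= t ^ 2) by (apply pow2_ge_0).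
    assert (E2 : M + t * (M ^ 2 * N + 1 / (2 * N)) - t * - H = S * (t ^ 2 + 1)).
    { replace (M + t * (M ^ 2 * N + 1 / (2 * N)) - t * - H) with ((M + (M ^ 2 * N + 1 / (2 * N)) * t) + t * H) by ring.
      rewrite <- Elin. ring. }
    rewrite E2. field. lra. }
  rewrite HSv.
  unfold is_pseries in HS. eapply is_series_ext; [|exact HS].
  intros n. unfold scal; simpl. unfold mult; simpl. rewrite pow_n_pow. unfold b.
  pose proof (INR_fact_neq_0 n). field. auto.
Qed.

End S.

Theorem lemma5 (M N : R) (a : nat -> R) (hM : 0 < M) (hN : 0 < N)
  (ha : is_a_seq M N a) :
  exists rho : R, 0 < rho /\
    forall t : R, Rabs t < rho ->
      is_series (fun m : nat => a m * t ^ m / INR (Factorial.fact m)) (a_closed M N t).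
Proof. eapply main_sec; eassumption. Qed.
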